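(* Let $M$ be a simple rank-$3$ matroid with nine elements whose ground set is the union of three long lines that share a common point. Then either $M$ has a $U_{2,5}$-minor, or $M\cong R_9$.
   Context: A point of a matroid is a rank-one flat; a line (rank-2 flat) is long if it contains at least three points. $R_9$ (the ternary Reid geometry) is the simple rank-$3$ matroid consisting of long lines $L_1,L_2,L_3$ with a common intersection point $x$ such that $|L_1|=|L_2|=4$, $|L_3|=3$, and both elements of $L_3-\{x\}$ lie on four long lines. *)

(* Defs.v *)
(* Finite matroids given by their independent sets,
   with ground set the whole finite type T. *)
From mathcomp Require Import all_boot.
Set Implicit Arguments. Unset Strict Implicit. Unset Printing Implicit Defensive.

Section Matroids.
Variable T : finType.
Variable indep : {set T} -> bool.

Definition is_matroid : Prop :=
  [/\ indep set0,
      (forall A B : {set T}, B \subset A -> indep A -> indep B) &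
      (forall A B : {set T}, indep A -> indep B -> #|A| < #|B| ->
          exists2 e, e \in B :\: A & indep (e |: A))].

Definition rk (X : {set T}) : nat :=
  \max_(A : {set T} | (A \subset X) && indep A) #|A|.

Definition simple : Prop := forall X : {set T}, #|X| <= 2 -> indep X.

Definition flat (F : {set T}) : bool :=
  [forall e, (e \notin F) ==> (rk F < rk (e |: F))].

Definition point (P : {set T}) : bool := flat P && (rk P == 1).
Definition line (L : {set T}) : bool := flat L && (rk L == 2).

Definition points_of (X : {set T}) : {set {set T}} :=
  [set P : {set T} | point P && (P \subset X)].

Definition long_line (L : {set T}) : bool := line L && (3 <= #|points_of L|).

Definition long_lines_through (y : T) : {set {set T}} :=
  [set L : {set T} | long_line L && (y \in L)].

(* Minors: for disjoint C, D, the minor M/C\D lives on N = E - (C u D) and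
   J \subseteq N is independent in it iff r(J u C) - r(C) = |J|.
   M has a U_{2,5}-minor iff for some C and some N disjoint from C with
   |N| = 5, the minor M/C\(E - C - N) has exactly the subsets of N of size
   <= 2 as independent sets (i.e. it is (isomorphic to) U_{2,5}). *)
Definition minor_indep (C J : {set T}) : bool := rk (J :|: C) == #|J| + rk C.

Definition has_U25_minor : Prop :=
  exists C N : {set T},
    [/\ [disjoint C & N], #|N| = 5 &
        forall J : {set T}, J \subset N -> minor_indep C J = (#|J| <= 2)].

(* R_9, the ternary Reid geometry, as defined in the paper: a simple
   rank-3 matroid consisting of long lines L1, L2, L3 with common point x,
   |L1| = |L2| = 4, |L3| = 3, and both elements of L3 - {x} lie on four
   long lines.  M is isomorphic to R_9 iff M has this structure. *)
Definition is_R9 : Prop :=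
  [/\ simple, rk setT = 3 &
    exists (L1 L2 L3 : {set T}) (x : T),
      [/\ [&& long_line L1, long_line L2 & long_line L3],
          [&& L1 != L2, L1 != L3 & L2 != L3],
          [&& x \in L1, x \in L2 & x \in L3],
          L1 :|: L2 :|: L3 = setT &
          [/\ #|L1| = 4, #|L2| = 4, #|L3| = 3 &
              forall y, y \in L3 :\ x -> #|long_lines_through y| = 4]]].

End Matroids.

(* Main.v *)
Require Import Defs.
From mathcomp Require Import all_boot zify.
Set Implicit Arguments. Unset Strict Implicit. Unset Printing Implicit Defensive.

Section Basics.
Variable T : finType.
Variable indep : {set T} -> bool.
Hypothesis hM : is_matroid indep.
Hypothesis hS : simple indep.
Hypothesis hr : rk indep setT = 3.

Local Notation rk := (rk indep).

Lemma indep0 : indep set0. Proof. by case: hM. Qed.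
Lemma indep_sub (A B : {set T}) : B \subset A -> indep A -> indep B.
Proof. by case: hM => _ h _; apply: h. Qed.
Lemma augment (A B : {set T}) : indep A -> indep B -> #|A| < #|B| ->
   exists2 e, e \in B :\: A & indep (e |: A).
Proof. by case: hM => _ _ h; apply: h. Qed.

Lemma rk_ge (A X : {set T}) : A \subset X -> indep A -> #|A| <= rk X.
Proof.
move=> sAX iA; rewrite /Defs.rk.
by apply: (@leq_bigmax_cond _ (fun B : {set T} => (B \subset X) && indep B) (fun B => #|B|) A); rewrite sAX iA.
Qed.

Lemma rk_wit (X : {set T}) : exists A : {set T}, [/\ A \subset X, indep A & #|A| = rk X].
Proof.
have h0 : 0 < #|[pred B : {set T} | (B \subset X) && indep B]|.
  by apply/card_gt0P; exists set0; rewrite inE sub0set indep0.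
have [A hA e] := @eq_bigmax_cond {set T} _ (fun B : {set T} => #|B|) h0.
move: hA; rewrite inE /= => /andP[sAX iA]; exists A; split=> //.
Qed.

Lemma rk_indep (X : {set T}) : indep X -> rk X = #|X|.
Proof.
move=> iX; apply/eqP; rewrite eqn_leq rk_ge // andbT.
by have [A [sAX _ <-]] := rk_wit X; apply: subset_leq_card.
Qed.

Lemma rk_le (X : {set T}) : rk X <= 3.
Proof.
by have [A [_ iA <-]] := rk_wit X; rewrite -hr; apply: rk_ge => //; apply: subsetT.
Qed.

Lemma rk_mono (X Y : {set T}) : X \subset Y -> rk X <= rk Y.
Proof.
move=> sXY; have [A [sAX iA <-]] := rk_wit X; apply: rk_ge => //.
exact: subset_trans sXY.
Qed.

Lemma rk_le_card (X : {set T}) : rk X <= #|X|.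
Proof. by have [A [sAX _ <-]] := rk_wit X; apply: subset_leq_card. Qed.

Lemma rk_eq_card (X : {set T}) : rk X = #|X| -> indep X.
Proof.
move=> e; have [A [sAX iA eA]] := rk_wit X.
have eAX : #|A| = #|X| by rewrite eA.
by have/setP eq := subset_cardP eAX sAX; rewrite -eq.
Qed.


Ltac setbool := apply/setP => ?; rewrite !inE; do ![case: (_ == _)] => //.

Definition D (u v w : T) := ~~ indep [set u; v; w].

Lemma set3C12 (a b c : T) : [set a; b; c] = [set b; a; c].
Proof. by setbool. Qed.
Lemma set3C23 (a b c : T) : [set a; b; c] = [set a; c; b].
Proof. by setbool. Qed.
Lemma D12 a b c : D a b c = D b a c. Proof. by rewrite /D set3C12. Qed.
Lemma D23 a b c : D a b c = D a c b. Proof. by rewrite /D set3C23. Qed.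

Lemma card3 (a b c : T) : a != b -> a != c -> b != c -> #|[set a; b; c]| = 3.
Proof.
move=> ab ac bc; rewrite setUC cardsU1 cards2 ab !inE negb_or eq_sym ac eq_sym bc.
by [].
Qed.

Lemma indep_small (X : {set T}) : #|X| <= 2 -> indep X.
Proof. exact: hS. Qed.

Lemma indep1 a : indep [set a]. Proof. by apply: hS; rewrite cards1. Qed.
Lemma indep2 a b : indep [set a; b]. Proof. by apply: hS; rewrite cards2; case: (a != b). Qed.

Lemma rk1 a : rk [set a] = 1. Proof. by rewrite rk_indep ?indep1 ?cards1. Qed.
Lemma rk2 a b : a != b -> rk [set a; b] = 2.
Proof. by move=> ab; rewrite rk_indep ?indep2 // cards2 ab. Qed.

Lemma D_distinct a b c : D a b c -> [/\ a != b, a != c & b != c].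
Proof.
rewrite /D; have [->|ab] := eqVneq a b.
  by rewrite (_ : [set b; b; c] = [set b; c]) ?indep2 //; setbool.
have [->|ac] := eqVneq a c.
  by rewrite (_ : [set c; b; c] = [set c; b]) ?indep2 //; setbool.
have [->|bc] := eqVneq b c.
  by rewrite (_ : [set a; c; c] = [set a; c]) ?indep2 //; setbool.
by [].
Qed.

Lemma line_mem L u v w : line indep L -> u \in L -> v \in L -> u != v -> w \notin L ->
  indep [set u; v; w].
Proof.
case/andP => /forallP fl /eqP rL uL vL uv wL.
have := fl w; rewrite wL /= rL => lt2.
have r3 : rk (w |: L) = 3 by apply/eqP; rewrite eqn_leq rk_le.
have [B [sB iB cB]] := rk_wit (w |: L).
have [|f] := @augment [set u; v] B (indep2 u v) iB.
  by rewrite cB r3 cards2 uv.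
rewrite inE => /andP[fuv fB] ifuv.
have fw : f = w.
  have := subsetP sB f fB; rewrite in_setU1; case/orP => [/eqP //|fL].
  have sub : f |: [set u; v] \subset L.
    by apply/subsetP => z; rewrite !inE; case/or3P => /eqP ->.
  by have := rk_ge sub ifuv; rewrite rL cardsU1 fuv cards2 uv.
move: ifuv; rewrite fw; congr indep; by setbool.
Qed.

Lemma line_in L u v w : line indep L -> u \in L -> v \in L -> u != v -> D u v w -> w \in L.
Proof.
move=> lL uL vL uv Dw; case: (boolP (w \in L)) => // wL.
by move: Dw; rewrite /D (line_mem lL uL vL uv wL).
Qed.

Lemma line_D L u v w : line indep L -> u \in L -> v \in L -> w \in L ->
  u != v -> u != w -> v != w -> D u v w.
Proof.
case/andP => _ /eqP rL uL vL wL uv uw vw; apply/negP => iS.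
have sub : [set u; v; w] \subset L.
  by apply/subsetP => z; rewrite !inE; case/orP => [/orP[]|] /eqP ->.
by have := rk_ge sub iS; rewrite rL card3.
Qed.

Lemma line_eq L L' u v : line indep L -> line indep L' -> u \in L -> v \in L ->
  u \in L' -> v \in L' -> u != v -> L = L'.
Proof.
move=> lL lL' uL vL uL' vL' uv.
suff sub : forall L1 L2, line indep L1 -> line indep L2 -> u \in L1 -> v \in L1 ->
   u \in L2 -> v \in L2 -> L1 \subset L2.
  by apply/eqP; rewrite eqEsubset !sub.
move=> L1 L2 l1 l2 u1 v1 u2 v2; apply/subsetP => w w1.
have [<-//|uw] := eqVneq u w. have [<-//|vw] := eqVneq v w.
exact: line_in l2 u2 v2 uv (line_D l1 u1 v1 w1 uv uw vw).
Qed.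

Lemma coltrans a b c e : c != e -> D a b c -> D a b e -> D a c e.
Proof.
move=> ce Dc De; have [ab ac bc] := D_distinct Dc; have [_ ae be] := D_distinct De.
apply/negP => iS.
have [|f] := @augment [set a; b] [set a; c; e] (indep2 a b) iS.
  by rewrite card3 // cards2 ab.
rewrite !inE negb_or => /andP[/andP[fa fb] /orP[/orP[/eqP fa'|/eqP fc]|/eqP fe]] if2.
- by rewrite fa' eqxx in fa.
- rewrite fc in if2.
  by move: Dc; rewrite /D (_ : [set a; b; c] = c |: [set a; b]) ?if2 //; setbool.
- rewrite fe in if2.
  by move: De; rewrite /D (_ : [set a; b; e] = e |: [set a; b]) ?if2 //; setbool.
Qed.


Lemma point_set1 P : point indep P -> exists e, P = [set e].
Proof.
case/andP => _ /eqP rP.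
have [A [sAP iA cA]] := rk_wit P.
have /cards1P [e eA] : #|A| == 1 by rewrite cA rP.
exists e; apply/eqP; rewrite eqEsubset; apply/andP; split; last first.
  by rewrite -eA.
apply/subsetP => f fP; rewrite inE; apply/negPn/negP => fe.
have sub : [set e; f] \subset P.
  apply/subsetP => z; rewrite !inE; case/orP => /eqP ->//.
  by apply: (subsetP sAP); rewrite eA inE.
by have := rk_ge sub (indep2 e f); rewrite rP cards2 eq_sym fe.
Qed.

Lemma set1_point e : point indep [set e].
Proof.
apply/andP; split; last by rewrite rk1.
apply/forallP => f; apply/implyP; rewrite inE => fe.
by rewrite rk1 rk2.
Qed.

Lemma points_ofE L : points_of indep L = [set [set e] | e in L].
Proof.
apply/setP => P; rewrite inE; apply/andP/imsetP.
  by case=> /point_set1 [e ->] sub; exists e => //; rewrite -sub1set.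
case=> e eL ->; split; first exact: set1_point.
by rewrite sub1set.
Qed.

Lemma card_points L : #|points_of indep L| = #|L|.
Proof. by rewrite points_ofE card_imset //; apply: set1_inj. Qed.

Lemma triple_line u v w : D u v w ->
  (forall e, e \notin [set u; v; w] -> indep [set u; v; e]) ->
  long_line indep [set u; v; w].
Proof.
move=> Dw he; have [uv uw vw] := D_distinct Dw.
have rS : rk [set u; v; w] = 2.
  apply/eqP; rewrite eqn_leq; apply/andP; split; last first.
    have sub : [set u; v] \subset [set u; v; w] by apply: subsetUl.
    by have := rk_ge sub (indep2 u v); rewrite cards2 uv.
  have [A [sA iA cA]] := rk_wit [set u; v; w].
  rewrite -cA; have := subset_leq_card sA; rewrite card3 // leq_eqVlt ltnS.
  case/orP => // /eqP cA3.
  have/setP eq := subset_cardP (etrans cA3 (esym (card3 uv uw vw))) sA.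
  by move: Dw; rewrite /D -eq iA.
rewrite /long_line card_points card3 // andbT /line rS eqxx andbT.
apply/forallP => e; apply/implyP => eS; rewrite rS.
have sub : [set u; v; e] \subset e |: [set u; v; w].
  by apply/subsetP => z; rewrite !inE; case/orP => [/orP[]|] /eqP ->; rewrite eqxx ?orbT.
move: eS; rewrite !inE !negb_or => /andP[/andP[eu ev] ew].
have eS : e \notin [set u; v; w] by rewrite !inE !negb_or eu ev ew.
by have := rk_ge sub (he e eS); rewrite card3 // eq_sym.
Qed.


Lemma uniq_gen Q a y b b' : line indep Q -> b \in Q -> b' \in Q -> b != b' ->
  a \notin Q -> y != a -> D y a b -> D y a b' -> False.
Proof.
move=> lQ bQ b'Q bb' aQ ya Db Db'.
have : D a b b' by apply: (@coltrans a y) => //; rewrite D12.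
rewrite D12 D23 => Dab; have := line_in lQ bQ b'Q bb' Dab.
by rewrite (negbTE aQ).
Qed.

Lemma inter L L' x e : line indep L -> line indep L' -> L != L' -> x \in L -> x \in L' ->
  e \in L -> e \in L' -> e = x.
Proof.
move=> l l' LL' xL xL' eL eL'; apply/eqP/negPn/negP => ex.
by move: LL'; rewrite (line_eq l l' eL xL eL' xL' ex) eqxx.
Qed.

Lemma pig (P Q : {set T}) (R : T -> T -> bool) a0 : #|P| = 3 -> #|Q| = 3 ->
  (forall a b b', a \in P -> b \in Q -> b' \in Q -> R a b -> R a b' -> b = b') ->
  a0 \in P -> ~~ [exists b in Q, R a0 b] ->
  exists2 b0, b0 \in Q & ~~ [exists a in P, R a b0].
Proof.
move=> cP cQ uR a0P na0.
case: (pickP [pred b | (b \in Q) && ~~ [exists a in P, R a b]]) => [b0 /andP[]|none].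
  by exists b0.
pose f b := odflt a0 [pick a in P | R a b].
have fP : forall b, b \in Q -> (f b \in P) && R (f b) b.
  move=> b bQ; move: (none b) => /=; rewrite bQ /= => /negbFE/existsP[a /andP[aP Rab]].
  rewrite /f; case: pickP => [a' /andP[]|/(_ a)]; first by move=> -> ->.
  by rewrite /= aP Rab.
have inj : {in Q &, injective f}.
  move=> b b' bQ b'Q e; have /andP[fb Rb] := fP b bQ; have /andP[_ Rb'] := fP b' b'Q.
  by rewrite -e in Rb'; apply: uR Rb Rb'.
have sub : f @: Q \subset P :\ a0.
  apply/subsetP => z /imsetP[b bQ ->]; have /andP[fb Rb] := fP b bQ.
  rewrite !inE fb andbT; apply/eqP => e; move: na0; rewrite -e.
  by move/existsP; apply; exists b; rewrite bQ.
have := subset_leq_card sub; rewrite card_in_imset // cQ.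
by move: (cardsD1 a0 P); rewrite a0P cP add1n => -[<-].
Qed.


Lemma rk0 : rk set0 = 0. Proof. by rewrite rk_indep ?indep0 ?cards0. Qed.

Lemma U25_line L : line indep L -> #|L| = 5 -> has_U25_minor indep.
Proof.
case/andP => _ /eqP rL cL; exists set0, L; split => //; first by rewrite -setI_eq0 set0I.
move=> J sJ; rewrite /minor_indep setU0 rk0 addn0.
case: (leqP #|J| 2) => hJ.
  by rewrite rk_indep ?eqxx // indep_small.
apply/negbTE; rewrite neq_ltn; apply/orP; left.
by apply: leq_ltn_trans hJ; rewrite -rL rk_mono.
Qed.

Lemma U25_of (y : T) (N : {set T}) : #|N| = 5 -> y \notin N ->
  (forall u v, u \in N -> v \in N -> u != v -> indep [set y; u; v]) ->
  has_U25_minor indep.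
Proof.
move=> cN yN hN; exists [set y], N; split => //; first by rewrite disjoints1.
move=> J sJ; rewrite /minor_indep rk1.
have yJ : y \notin J by apply: contra yN; apply: (subsetP sJ).
case: (leqP #|J| 2) => hJ.
  have iJ : indep (J :|: [set y]).
    move: hJ; rewrite leq_eqVlt ltnS leq_eqVlt ltnS leqn0.
    case/or3P => [/cards2P[u [v [uv eJ]]]|/cards1P[u ->]|/eqP/cards0_eq ->].
    - subst J; have uN : u \in N := subsetP sJ u (setU11 u [set v]).
      have vN : v \in N := subsetP sJ v (setU1r u (set11 v)).
      by rewrite (_ : _ :|: _ = [set y; u; v]) ?hN //; setbool.
    - by rewrite setUC indep2.
    - by rewrite set0U indep1.
  by rewrite rk_indep // setUC cardsU1 yJ add1n addn1 eqxx.
apply/negbTE; rewrite neq_ltn; apply/orP; left.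
by apply: leq_ltn_trans (rk_le _) _; rewrite addn1 ltnS.
Qed.


Lemma long_line_line L : long_line indep L -> line indep L.
Proof. by case/andP. Qed.

Lemma long_card L : long_line indep L -> 3 <= #|L|.
Proof. by case/andP => _; rewrite card_points. Qed.

Section Core.
Variables (A B C : {set T}) (x : T).
Hypotheses (llA : long_line indep A) (llB : long_line indep B) (llC : long_line indep C).
Hypotheses (AB : A != B) (AC : A != C) (BC : B != C).
Hypotheses (xA : x \in A) (xB : x \in B) (xC : x \in C).
Hypothesis (U : A :|: B :|: C = setT).
Hypotheses (cA : #|A| = 4) (cB : #|B| = 4) (cC : #|C| = 3).

Let lA := long_line_line llA.
Let lB := long_line_line llB.
Let lC := long_line_line llC.

Lemma memT e : (e \in A) || (e \in B) || (e \in C).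
Proof. have : e \in [set: T] by rewrite inE.
by rewrite -U !inE. Qed.

Section PerY.
Variable y : T.
Hypotheses (yC : y \in C) (yx : y != x).

Lemma yA : y \notin A.
Proof. by apply/negP => yA; move: yx; rewrite (inter lA lC AC xA xC yA yC) eqxx. Qed.
Lemma yB : y \notin B.
Proof. by apply/negP => yB; move: yx; rewrite (inter lB lC BC xB xC yB yC) eqxx. Qed.

Lemma aB a : a \in A :\ x -> a \notin B.
Proof.
rewrite !inE => /andP[ax aA]; apply/negP => aB.
by move: ax; rewrite (inter lA lB AB xA xB aA aB) eqxx.
Qed.
Lemma bA b : b \in B :\ x -> b \notin A.
Proof.
rewrite !inE => /andP[bx bB]; apply/negP => bA.
by move: bx; rewrite (inter lA lB AB xA xB bA bB) eqxx.
Qed.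
Lemma aC a : a \in A :\ x -> a \notin C.
Proof.
rewrite !inE => /andP[ax aA]; apply/negP => aC.
by move: ax; rewrite (inter lA lC AC xA xC aA aC) eqxx.
Qed.

Lemma yneq (e : T) (L : {set T}) : y \notin L -> e \in L -> y != e.
Proof. by move=> yL eL; apply: contraNneq yL => ->. Qed.

Lemma uniqA a b b' : a \in A :\ x -> b \in B :\ x -> b' \in B :\ x ->
  D y a b -> D y a b' -> b = b'.
Proof.
move=> aA' bB' b'B' Db Db'; apply/eqP/negPn/negP => bb'.
have aA : a \in A by move: aA'; rewrite inE => /andP[].
move: bB' b'B'; rewrite !inE => /andP[_ bB] /andP[_ b'B].
exact: (uniq_gen lB bB b'B bb' (aB aA') (yneq yA aA) Db Db').
Qed.

Lemma U25_case b0 : b0 \in B :\ x -> ~~ [exists a in A :\ x, D y a b0] ->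
  has_U25_minor indep.
Proof.
move=> b0B' nb0; have b0A := bA b0B'.
move: (b0B'); rewrite !inE => /andP[b0x b0B].
have hb : forall u, u \in A -> indep [set y; u; b0].
  move=> u uA; have [->|ux] := eqVneq u x.
    have := line_mem lB b0B xB b0x yB.
    by rewrite (_ : [set b0; x; y] = [set y; x; b0]) //; setbool.
  apply/negPn/negP => Du; move: nb0 => /existsP; apply; exists u.
  by rewrite !inE ux uA; rewrite /D in Du *.
apply: (@U25_of y (b0 |: A)).
- by rewrite cardsU1 b0A cA.
- by rewrite in_setU1 negb_or yA andbT (yneq yB b0B).
move=> u v; rewrite !in_setU1 => /orP[/eqP->|uA] /orP[/eqP->|vA] uv.
- by rewrite eqxx in uv.
- by rewrite set3C23 hb.
- exact: hb.
- have := line_mem lA uA vA uv yA.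
  by rewrite (_ : [set u; v; y] = [set y; u; v]) //; setbool.
Qed.


Definition partner a := odflt x [pick b in B :\ x | D y a b].
Definition Mline a := [set y; a; partner a].

Section AllMatched.
Hypothesis allA : forall a, a \in A :\ x -> [exists b in B :\ x, D y a b].
Hypothesis allB : forall b, b \in B :\ x -> [exists a in A :\ x, D y a b].

Lemma partnerP a : a \in A :\ x -> (partner a \in B :\ x) && D y a (partner a).
Proof.
move=> aA; have /existsP[b /andP[bB Db]] := allA aA.
rewrite /partner; case: pickP => [b' /andP[-> ->] //|/(_ b)].
by rewrite /= bB Db.
Qed.

Lemma Mline_long a : a \in A :\ x -> long_line indep (Mline a).
Proof.
move=> aA'; have /andP[pB' Dp] := partnerP aA'.
have aA : a \in A by move: aA'; rewrite inE => /andP[].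
have pB : partner a \in B by move: pB'; rewrite inE => /andP[].
apply: triple_line => // e; rewrite !inE !negb_or => /andP[/andP[ey ea] ep].
apply/negPn/negP => De.
have := memT e; case/orP => [/orP[eA|eB]|eC].
- have : D a e y by rewrite D23 D12.
  have ae : a != e by rewrite eq_sym.
  move/(line_in lA aA eA ae) => yA'.
  by move: yA; rewrite yA'.
- have Dape : D a (partner a) e.
    apply: (@coltrans a y); first by rewrite eq_sym.
      by rewrite D12.
    by rewrite D12.
  move: Dape; rewrite D12 D23 => Dpea.
  have pe : partner a != e by rewrite eq_sym.
  have := line_in lB pB eB pe Dpea.
  by rewrite (negbTE (aB aA')).
- have : D y e a by rewrite D23.
  have ye : y != e by rewrite eq_sym.
  move/(line_in lC yC eC ye) => aC'.
  by move: (aC aA'); rewrite aC'.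
Qed.


Lemma in_Mline a : y \in Mline a /\ a \in Mline a.
Proof. by rewrite !inE !eqxx /= orbT. Qed.

Lemma llt : long_lines_through indep y = C |: [set Mline a | a in A :\ x].
Proof.
apply/setP => L; rewrite !inE; apply/andP/orP.
  case=> llL yL; have lL := long_line_line llL.
  have : 0 < #|L :\ y|.
    by have := long_card llL; rewrite (cardsD1 y L) yL add1n ltnS; apply: leq_trans.
  case/card_gt0P => z; rewrite !inE => /andP[zy zL].
  have yz : y != z by rewrite eq_sym.
  case: (boolP (z \in C)) => zC.
    by left; rewrite (line_eq lL lC yL zL yC zC yz).
  have zx : z != x by apply: contraNneq zC => ->.
  right; apply/imsetP.
  have := memT z; rewrite (negbTE zC) orbF => /orP[zA|zB].
    have zA' : z \in A :\ x by rewrite !inE zx zA.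
    exists z => //; have [yM zM] := in_Mline z.
    exact: line_eq lL (long_line_line (Mline_long zA')) yL zL yM zM yz.
  have zB' : z \in B :\ x by rewrite !inE zx zB.
  have /existsP[a /andP[aA' Da]] := allB zB'.
  have /andP[pB' Dp] := partnerP aA'.
  have pz : partner a = z := uniqA aA' pB' zB' Dp Da.
  exists a => //.
  have zM : z \in Mline a by rewrite !inE pz eqxx !orbT.
  exact: line_eq lL (long_line_line (Mline_long aA')) yL zL (in_Mline a).1 zM yz.
case=> [/eqP->|/imsetP[a aA' ->]]; first by [].
by rewrite Mline_long // (in_Mline a).1.
Qed.

Lemma card_llt : #|long_lines_through indep y| = 4.
Proof.
rewrite llt cardsU1 card_in_imset; last first.
  move=> a a' aA' a'A' e.
  have := (in_Mline a).2; rewrite e !inE => /orP[/orP[/eqP ay|/eqP //]|/eqP ap].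
    by move: yA; rewrite -ay; move: aA'; rewrite inE => /andP[_ ->].
  have /andP[pB' _] := partnerP a'A'.
  by move: (aB aA'); rewrite ap; move: pB'; rewrite inE => /andP[_ ->].
have -> : C \notin [set Mline a | a in A :\ x].
  apply/imsetP => -[a aA' eC].
  have : x \in Mline a by rewrite -eC.
  have /andP[pB' _] := partnerP aA'.
  rewrite !inE => /orP[/orP[/eqP xy|/eqP xa]|/eqP xp].
  - by move: yx; rewrite xy eqxx.
  - by move: aA'; rewrite -xa !inE eqxx.
  - by move: pB'; rewrite -xp !inE eqxx.
have := cardsD1 x A; rewrite xA cA add1n => -[<-].
by [].
Qed.

End AllMatched.


Lemma per_y : has_U25_minor indep \/ #|long_lines_through indep y| = 4.
Proof.
case: (pickP [pred b | (b \in B :\ x) && ~~ [exists a in A :\ x, D y a b]])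
   => [b0 /andP[b0B nb0]|allB]; first by left; apply: (U25_case b0B nb0).
case: (pickP [pred a | (a \in A :\ x) && ~~ [exists b in B :\ x, D y a b]])
   => [a0 /andP[a0A na0]|allA].
  left.
  have cA' : #|A :\ x| = 3 by have := cardsD1 x A; rewrite xA cA add1n => -[<-].
  have cB' : #|B :\ x| = 3 by have := cardsD1 x B; rewrite xB cB add1n => -[<-].
  have [b0 b0B nb0] := pig (R := fun a b => D y a b) cA' cB' uniqA a0A na0.
  exact: U25_case b0B nb0.
right; apply: card_llt.
- by move=> a aA; move: (allA a) => /=; rewrite aA /= => /negbFE.
- by move=> b bB; move: (allB b) => /=; rewrite bB /= => /negbFE.
Qed.

End PerY.

Lemma core_R9 : has_U25_minor indep \/ is_R9 indep.
Proof.
case: (pickP [pred y | (y \in C :\ x) && (#|long_lines_through indep y| != 4)])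
   => [y /andP[yC' n4]|all4].
  move: yC'; rewrite !inE => /andP[yx yC].
  case: (per_y yC yx) => [|e]; first by left.
  by rewrite e in n4.
right; split => //; exists A, B, C, x; split => //.
- by rewrite llA llB llC.
- by rewrite AB AC BC.
- by rewrite xA xB xC.
split => // y yC'; move: (all4 y); rewrite /= yC' /= => /negbFE/eqP.
by [].
Qed.

End Core.

End Basics.

Lemma arith (a b c : nat) : 2 < a -> 2 < b -> 2 < c -> 9 = a + b - 1 + c - 1 ->
  a != 5 -> b != 5 -> c != 5 ->
  (c = 3 /\ a = 4 /\ b = 4) \/ (b = 3 /\ a = 4 /\ c = 4) \/ (a = 3 /\ b = 4 /\ c = 4).
Proof. move=> *; lia. Qed.

Theorem lemma5p1 (T : finType) (indep : {set T} -> bool) :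
  is_matroid indep -> simple indep -> rk indep setT = 3 -> #|T| = 9 ->
  (exists (L1 L2 L3 : {set T}) (x : T),
      [/\ [&& long_line indep L1, long_line indep L2 & long_line indep L3],
          [&& L1 != L2, L1 != L3 & L2 != L3],
          [&& x \in L1, x \in L2 & x \in L3] &
          L1 :|: L2 :|: L3 = setT]) ->
  has_U25_minor indep \/ is_R9 indep.
Proof.
move=> hM hS hr cT [L1 [L2 [L3 [x [/and3P[l1 l2 l3] /and3P[d12 d13 d23] /and3P[x1 x2 x3] U]]]]].
have ln1 := long_line_line l1; have ln2 := long_line_line l2; have ln3 := long_line_line l3.
have i12 : L1 :&: L2 = [set x].
  apply/setP => e; rewrite !inE; apply/andP/eqP => [[e1 e2]|->]; last by [].
  exact: (inter hM hS hr ln1 ln2 d12 x1 x2 e1 e2).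
have i3 : (L1 :|: L2) :&: L3 = [set x].
  apply/setP => e; rewrite !inE; apply/andP/eqP => [[/orP[e1|e2] e3]|->]; last by rewrite x1 x3.
    exact: (inter hM hS hr ln1 ln3 d13 x1 x3 e1 e3).
  exact: (inter hM hS hr ln2 ln3 d23 x2 x3 e2 e3).
have hc : 9 = #|L1| + #|L2| - 1 + #|L3| - 1.
  by have := cardsU (L1 :|: L2) L3; rewrite U i3 cards1 cardsU i12 cards1 cardsT cT.
have s1 := long_card hM hS l1; have s2 := long_card hM hS l2; have s3 := long_card hM hS l3.
case: (eqVneq #|L1| 5) => [e|n1]; first by left; have := U25_line hM hS ln1 e.
case: (eqVneq #|L2| 5) => [e|n2]; first by left; have := U25_line hM hS ln2 e.
case: (eqVneq #|L3| 5) => [e|n3]; first by left; have := U25_line hM hS ln3 e.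
have [[e3 [e1 e2]]|[[e2 [e1 e3]]|[e1 [e2 e3]]]] := arith s1 s2 s3 hc n1 n2 n3.
- exact: (core_R9 hM hS hr l1 l2 l3 d12 d13 d23 x1 x2 x3 U e1 e2 e3).
- have U' : L1 :|: L3 :|: L2 = setT by rewrite -U setUAC.
  have d32 : L3 != L2 by rewrite eq_sym.
  exact: (core_R9 hM hS hr l1 l3 l2 d13 d12 d32 x1 x3 x2 U' e1 e3 e2).
- have U' : L2 :|: L3 :|: L1 = setT by rewrite -U setUC setUA.
  have d21 : L2 != L1 by rewrite eq_sym.
  have d31 : L3 != L1 by rewrite eq_sym.
  exact: (core_R9 hM hS hr l2 l3 l1 d23 d21 d31 x2 x3 x1 U' e2 e3 e1).
Qed.
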